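(* Let $d\in\mathbb{N}$, $\ell\in\mathbb{N}_0$, let $k$ be a stationary product kernel on $\mathbb{R}^d$, and let $K_{\mathcal{G}_{\ell,d}}$ be the kernel matrix of $k$ on the $d$-dimensional sparse grid $\mathcal{G}_{\ell,d}$ of resolution $\ell$. For any vector $\mathbf v\in\mathbb{R}^{|\mathcal{G}_{\ell,d}|}$, the Sparse Grid Kernel-MVM Algorithm (described in the context) computes $K_{\mathcal{G}_{\ell,d}}\mathbf v$, and it does so in $O(\ell^{d}2^{\ell})$ time.
   Context: Grids. For $l\in\mathbb{N}_0$ let $\Omega_l=\{i/2^{l+1} : 1\le i\le 2^{l+1},\ i \text{ odd}\}\subset[0,1]$ (so $|\Omega_l|=2^l$ and $\Omega_l\cap\Omega_{l'}=\emptyset$ for $l\neq l'$). For $\mathbf l\in\mathbb{N}_0^d$ let $\Omega_{\mathbf l}=\Omega_{l_1}\times\cdots\times\Omega_{l_d}$. The sparse grid is $\mathcal{G}_{\ell,d}=\bigcup_{\mathbf l\in\mathbb{N}_0^d,\ \|\mathbf l\|_1\le\ell}\Omega_{\mathbf l}\subset[0,1]^d$. One has $\mathcal{G}_{\ell',d}\subseteq\mathcal{G}_{\ell,d}$ for $\ell'\le\ell$, $\mathcal{G}_{\ell,1}=\bigcup_{i=0}^{\ell}\Omega_i$, and for $d\ge2$, $\mathcal{G}_{\ell,d}=\bigcup_{i=0}^{\ell}\Omega_i\times\mathcal{G}_{\ell-i,d-1}$ (a disjoint union). Kernel. A stationary product kernel is $k(\mathbf x,\mathbf x')=\prod_{j=1}^d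 k_j(x_j-x_j')$ for one-dimensional functions $k_j$. For a finite set $U$, $K_U=[k(\mathbf x,\mathbf x')]_{\mathbf x,\mathbf x'\in U}$ with rows/columns indexed by $U$ in a fixed order. In dimension 1, $K_{\mathcal{G}_{\ell,1}}$ (equally spaced points, stationary kernel) is Toeplitz and is multiplied by a vector using fast (FFT-based) Toeplitz multiplication in $O(\ell2^\ell)$ time. Selection matrices. For finite $U\subseteq V$, $\mathcal S_{U,V}\in\{0,1\}^{|U|\times|V|}$ has entry $(a,b)$ equal to $1$ iff the $a$-th element of $U$ equals the $b$-th element of $V$, and $\mathcal S_{V,U}=\mathcal S_{U,V}^T$ (selecting entries, resp. inserting zeros). Algorithm $\mathbf{mvm}(K_{\mathcal{G}_{\ell,d}},\mathbf v)$: For each $i=0,\dots,\ell$ let $V_i$ be the $|\Omega_i|\times|\mathcal{G}_{\ell-i,d-1}|$ matrix obtained by reshaping the entries of $\mathbf v$ indexed by $\Omega_i\times\mathcal{G}_{\ell-i,d-1}$ (row index in $\Omega_i$, column index in $\mathcal{G}_{\ell-i,d-1}$). If $d=1$, return $K_{\mathcal{G}_{\ell,1}}\mathbf v$ (Toeplitz multiplication). Otherwise: (pre-computation) for $i=0,\dots,\ell$ set $\overline A_i=K_{\mathcal{G}_{i,1}}\mathcal S_{\mathcal{G}_{i,1},\Omega_i}V_i$ and $\overline B_i^T=\mathbf{mvm}(K_{\mathcal{G}_{\ell-i,d-1}},V_i^T)$ (recursive multiplication applied to each column); (main loop) for $i=0,\dots,\ell$ set $A_i^T=\mathbf{mvm}\big(K_{\mathcal{G}_{\ell-i,d-1}},\big(\sum_{j>i}\mathcal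 S_{\Omega_i,\mathcal{G}_{j,1}}\overline A_j\,\mathcal S_{\mathcal{G}_{\ell-j,d-1},\mathcal{G}_{\ell-i,d-1}}\big)^T\big)$, $B_i=\mathcal S_{\Omega_i,\mathcal{G}_{i,1}}K_{\mathcal{G}_{i,1}}\big(\sum_{j\le i}\mathcal S_{\mathcal{G}_{i,1},\Omega_j}\overline B_j\,\mathcal S_{\mathcal{G}_{\ell-j,d-1},\mathcal{G}_{\ell-i,d-1}}\big)$, and $\mathbf u_i=\mathrm{vec}(A_i)+\mathrm{vec}(B_i)$; the output $\mathbf u$ is the vector whose entries indexed by $\Omega_i\times\mathcal{G}_{\ell-i,d-1}$ are $\mathbf u_i$ (with vectorization consistent with the reshaping used for $V_i$). *)

(* Defs.v *)
From mathcomp Require Import all_boot all_order all_algebra.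
From mathcomp Require Import reals.
Set Implicit Arguments. Unset Strict Implicit. Unset Printing Implicit Defensive.
Import GRing.Theory Num.Theory.

(* A one-dimensional grid point is encoded by (l, i) with i odd, standing for
   the real number i / 2^(l+1) in Omega_l.  A d-dimensional point is a list of
   d such pairs. *)
Definition pt := seq (nat * nat).

Definition Omega (l : nat) : seq (nat * nat) :=
  [seq (l, j.*2.+1) | j <- iota 0 (2 ^ l)].

Definition G1 (L : nat) : seq (nat * nat) := flatten [seq Omega i | i <- iota 0 L.+1].

(* Sparse grid G_{L,d} = union_{|l|_1 <= L} Omega_{l_1} x ... x Omega_{l_d},
   enumerated through the disjoint decomposition
   G_{L,d} = union_{i=0}^{L} Omega_i x G_{L-i,d-1}. *)
Fixpoint SG (L d : nat) : seq pt :=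
  match d with
  | 0 => [:: [::]]
  | d'.+1 => flatten [seq [seq x :: p | x <- Omega i, p <- SG (L - i) d'] | i <- iota 0 L.+1]
  end.

Section Kernel.
Variable R : realType.
Local Open Scope ring_scope.

Definition coord (a : nat * nat) : R := a.2%:R / (2 ^ a.1.+1)%:R.

Definition kern (ks : nat -> R -> R) (p q : pt) : R :=
  \prod_(j < size p) ks j (coord (nth (0%N, 0%N) p j) - coord (nth (0%N, 0%N) q j)).

Definition Kmul (ks : nat -> R -> R) (U : seq pt) (v : pt -> R) : pt -> R :=
  fun x => \sum_(y <- U) kern ks x y * v y.

(* one-dimensional kernel matrix K_U (Toeplitz for U = G_{i,1}) times w *)
Definition K1 (k : R -> R) (U : seq (nat * nat)) (w : nat * nat -> R) : nat * nat -> R :=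
  fun y => \sum_(x <- U) k (coord y - coord x) * w x.

(* One level (d = d'+1 >= 2) of the sparse grid kernel-MVM algorithm; [rec L' w]
   is the recursive multiplication by K_{G_{L',d'}}.  Matrices indexed by
   Omega_i x G_{L-i,d'} are represented as functions; selection matrices become
   restriction / zero insertion (indicator of membership). *)
Definition step (k1 : R -> R) (d' L : nat) (rec : nat -> (pt -> R) -> pt -> R)
  (v : pt -> R) : pt -> R :=
  (* Abar_j = K_{G_{j,1}} S_{G_{j,1},Omega_j} V_j, entry (y,p) *)
  let Abar j p y := K1 k1 (G1 j) (fun x => if x \in Omega j then v (x :: p) else 0) y in
  (* Bbar_j^T = mvm(K_{G_{L-j,d'}}, V_j^T), entry (y,p) *)
  let Bbar j y p := rec (L - j)%N (fun p' => v (y :: p')) p in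
  (* sum_{j>i} S_{Omega_i,G_{j,1}} Abar_j S_{G_{L-j,d'},G_{L-i,d'}} *)
  let M i x p := \sum_(j <- iota i.+1 (L - i))
                   (if p \in SG (L - j) d' then Abar j p x else 0) in
  let A i x p := rec (L - i)%N (fun p' => M i x p') p in
  (* sum_{j<=i} S_{G_{i,1},Omega_j} Bbar_j S_{G_{L-j,d'},G_{L-i,d'}} *)
  let N i p y := \sum_(j <- iota 0 i.+1) (if y \in Omega j then Bbar j y p else 0) in
  let B i x p := K1 k1 (G1 i) (N i p) x in
  fun q => match q with x :: p => A x.1 x p + B x.1 x p | [::] => 0 end.

Fixpoint mvm (ks : nat -> R -> R) (d L : nat) (v : pt -> R) {struct d} : pt -> R :=
  match d with
  | 0 => Kmul ks (SG L 0) v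
  | d'.+1 => if d' is 0 then Kmul ks (SG L 1) v
             else step (ks 0%N) d' L (mvm (fun j => ks j.+1) d') v
  end.
End Kernel.

(* Operation count of mvm, where T n is the cost of one Toeplitz
   multiplication by K_{G_{n,1}}, and every entry of a formed / added /
   selected matrix costs one unit. *)
Fixpoint cost (T : nat -> nat) (d L : nat) {struct d} : nat :=
  match d with
  | 0 => 1
  | d'.+1 =>
    if d' is 0 then T L else
    \sum_(i < L.+1)
      ( (* precomputation: Abar_i and Bbar_i *)
        size (SG (L - i) d') * T i + 2 ^ i * cost T d' (L - i)
        (* A_i: forming the sum of L-i terms, then recursive multiplication *)
      + (L - i) * 2 ^ i * size (SG (L - i) d') + 2 ^ i * cost T d' (L - i)
        (* B_i: forming the sum, Toeplitz products, selection *)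
      + size (G1 i) * size (SG (L - i) d') + size (SG (L - i) d') * T i
      + 2 ^ i * size (SG (L - i) d')
        (* u_i = vec A_i + vec B_i *)
      + 2 ^ i * size (SG (L - i) d'))
  end.

(* Main.v *)
Require Import Defs.
From mathcomp Require Import all_boot all_order all_algebra.
From mathcomp Require Import reals zify.
Set Implicit Arguments. Unset Strict Implicit. Unset Printing Implicit Defensive.

Lemma Omega1 i x : x \in Omega i -> x.1 = i.
Proof. by case/mapP => j _ ->. Qed.

Lemma Omega_uniq i : uniq (Omega i).
Proof.
rewrite /Omega map_inj_uniq ?iota_uniq // => a b [] Hab.
exact: double_inj Hab.
Qed.

Lemma SG_S n d : SG n d.+1 =
  flatten [seq [seq x :: p | x <- Omega i, p <- SG (n - i) d] | i <- iota 0 n.+1].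
Proof. by []. Qed.

Lemma SG_mem n d q : q \in SG n d.+1 ->
  exists i x p, [/\ i <= n, x \in Omega i, p \in SG (n-i) d & q = x :: p].
Proof.
case/flattenP => s /mapP [i]; rewrite mem_iota add0n ltnS => Hi -> /allpairsP [[x p] /= [Hx Hp ->]].
by exists i, x, p.
Qed.

Lemma SG_memI n d i x p : i <= n -> x \in Omega i -> p \in SG (n-i) d -> x :: p \in SG n d.+1.
Proof.
move=> Hi Hx Hp; apply/flattenP; exists [seq x :: p | x <- Omega i, p <- SG (n - i) d].
  by apply/mapP; exists i; rewrite // mem_iota add0n ltnS.
by apply/allpairsP; exists (x, p).
Qed.

Lemma SG_mono d n m q : n <= m -> q \in SG n d -> q \in SG m d.
Proof.
elim: d n m q => [|d IH] n m q Hnm; first by [].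
case/SG_mem => i [x [p [Hi Hx Hp ->]]].
apply: (@SG_memI _ _ i) => //; first exact: leq_trans Hi Hnm.
apply: IH Hp; exact: leq_sub2r.
Qed.

Lemma uniq_flatten_map (T : eqType) (F : nat -> seq T) (s : seq nat) :
  uniq s -> (forall i, i \in s -> uniq (F i)) ->
  (forall i j y, y \in F i -> y \in F j -> i = j) ->
  uniq (flatten (map F s)).
Proof.
elim: s => [|a s IH] //= /andP [Ha Hs] HF Hd.
rewrite cat_uniq HF ?mem_head // IH // => [|i Hi]; last by apply: HF; rewrite inE Hi orbT.
rewrite andbT; apply/hasPn => y /flattenP [t /mapP [j Hj ->]] Hy; apply/negP => Hy'.
have := Hd _ _ _ Hy Hy' => Eja; by move: Ha; rewrite -Eja Hj.
Qed.

Lemma SG_uniq n d : uniq (SG n d).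
Proof.
elim: d n => [|d IH] n; first by [].
rewrite SG_S.
apply: (@uniq_flatten_map _ (fun i => [seq x :: p | x <- Omega i, p <- SG (n - i) d])); first exact: iota_uniq.
  move=> i _; apply: allpairs_uniq; [exact: Omega_uniq| exact: IH|].
  by move=> [a b] [c e] _ _ /= [-> ->].
move=> i j y /allpairsP [[x p] /= [Hx _ ->]] /allpairsP [[x' p'] /= [Hx' _ []]] Exx _.
by rewrite -(Omega1 Hx) -(Omega1 Hx') Exx.
Qed.

Section Corr.
Variable R : realType.
Import GRing.Theory Num.Theory.
Local Open Scope ring_scope.

Lemma sum_pick n l (F : nat -> R) (P : pred nat) : (l < n)%N ->
  (forall j, P j = (j == l)) ->
  \sum_(j <- iota 0 n) (if P j then F j else 0) = F l.
Proof.
move=> Hl HP; rewrite -big_mkcond (eq_bigl (pred1 l)) // -big_filter.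
by rewrite filter_pred1_uniq ?iota_uniq ?mem_iota // big_seq1.
Qed.

Lemma sub_sum (T : eqType) (s t : seq T) (H : T -> R) : uniq s -> uniq t ->
  {subset t <= s} -> \sum_(y <- t) H y = \sum_(y <- s) (if y \in t then H y else 0).
Proof.
move=> us ut st; rewrite -big_mkcond -big_filter; apply: perm_big.
apply: uniq_perm => //; first exact: filter_uniq.
by move=> y; rewrite mem_filter; case yt: (y \in t) => //=; rewrite st.
Qed.

Lemma Omega_eq l j y : y \in Omega l -> (y \in Omega j) = (j == l).
Proof.
move=> Hy; case: eqP => [->|ne] //; apply/negP => Hy'.
by apply: ne; rewrite -(Omega1 Hy) (Omega1 Hy').
Qed.

Lemma G1_restrict j (f g : nat * nat -> R) :
  \sum_(x0 <- G1 j) f x0 * (if x0 \in Omega j then g x0 else 0) =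
  \sum_(x0 <- Omega j) f x0 * g x0.
Proof.
rewrite /G1 big_flatten big_map.
rewrite (eq_bigr (fun l => if l == j then \sum_(x0 <- Omega j) f x0 * g x0 else 0)).
  exact: (@sum_pick j.+1 j (fun _ => \sum_(x0 <- Omega j) f x0 * g x0) (fun l => l == j)).
move=> l _; case: eqP => [->|ne].
  by apply: eq_big_seq => x0 ->.
rewrite big1_seq // => x0 /andP [_ Hx0].
by rewrite (Omega_eq j Hx0) eq_sym (negbTE (introN eqP ne)) mulr0.
Qed.

Lemma kern_cons (ks : nat -> R -> R) x y p q : kern ks (x :: p) (y :: q) =
  ks 0%N (Defs.coord R x - Defs.coord R y) * kern (fun j => ks j.+1) p q.
Proof.
by rewrite /kern /= big_ord_recl /=.

Qed.


Lemma Kmul_S (ks : nat -> R -> R) L d v x p :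
  Kmul ks (SG L d.+1) v (x :: p) =
  \sum_(j <- iota 0 L.+1) \sum_(x' <- Omega j) \sum_(p' <- SG (L - j) d)
     ks 0%N (Defs.coord R x - Defs.coord R x') * kern (fun j => ks j.+1) p p' * v (x' :: p').
Proof.
rewrite /Kmul SG_S big_flatten big_map; apply: eq_bigr => j _.
rewrite big_allpairs_dep; apply: eq_bigr => x' _; apply: eq_bigr => p' _.
by rewrite kern_cons.
Qed.

Lemma mvm_correct d : forall (ks : nat -> R -> R) L v q, q \in SG L d.+1 ->
  mvm ks d.+1 L v q = Kmul ks (SG L d.+1) v q.
Proof.
elim: d => [|d IH] ks L v q Hq; first by [].
have -> : mvm ks d.+2 L v = step (ks 0%N) d.+1 L (mvm (fun j => ks j.+1) d.+1) v by [].
case/SG_mem: Hq => i [x [p [Hi Hx Hp ->]]].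
rewrite /step; cbv beta iota zeta; rewrite (Omega1 Hx) Kmul_S.
have EL : L.+1 = (i.+1 + (L - i))%N by rewrite addSn subnKC.
rewrite EL iotaD big_cat add0n addrC; congr (_ + _).
  rewrite /K1 /G1 big_flatten big_map; apply: eq_big_seq => l Hl.
  have Hl' : (l < i.+1)%N by move: Hl; rewrite mem_iota.
  apply: eq_big_seq => y Hy.
  rewrite (@sum_pick i.+1 l _ (fun j => y \in Omega j)) //; last first.
    by move=> j; rewrite (Omega_eq j Hy).
  rewrite IH; last by apply: (SG_mono _ Hp); apply: leq_sub2l.
  by rewrite /Kmul mulr_sumr; apply: eq_bigr => p' _; rewrite mulrA.
rewrite IH // /Kmul.
transitivity (\sum_(j <- iota i.+1 (L - i)) \sum_(p'' <- SG (L - i) d.+1)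
   (if p'' \in SG (L - j) d.+1 then \sum_(x' <- Omega j)
      ks 0%N (Defs.coord R x - Defs.coord R x') * kern (fun j => ks j.+1) p p'' * v (x' :: p'')
    else 0)).
  rewrite exchange_big; apply: eq_bigr => p'' _; rewrite mulr_sumr; apply: eq_bigr => j _.
  case: ifP => _; last by rewrite mulr0.
  rewrite /K1 G1_restrict mulr_sumr; apply: eq_bigr => x' _.
  by rewrite mulrCA mulrA.
apply: eq_big_seq => j Hj.
have Hj' : (i <= j)%N by move: Hj; rewrite mem_iota => /andP [/ltnW].
rewrite [RHS]exchange_big (@sub_sum _ (SG (L - i) d.+1) (SG (L - j) d.+1)) ?SG_uniq //.
by move=> y; apply: SG_mono; apply: leq_sub2l.
Qed.
End Corr.

Lemma leq_pow m n e : m <= n -> m ^ e <= n ^ e.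
Proof. by move=> H; elim: e => // e IH; rewrite !expnS leq_mul. Qed.

Lemma sum_iota_const n c : \sum_(i <- iota 0 n) c = n * c.
Proof. by rewrite big_const_seq count_predT size_iota iter_addn_0 mulnC. Qed.

Lemma geo n : \sum_(i <- iota 0 n.+1) 2 ^ i < 2 ^ n.+1.
Proof.
elim: n => [|n IH]; first by rewrite big_cons big_nil.
rewrite -[n.+2]addn1 iotaD big_cat big_seq1 add0n addn1.
by rewrite [2 ^ n.+2]expnS mul2n -addnn ltn_add2r.
Qed.

Lemma size_Omega i : size (Omega i) = 2 ^ i.
Proof. by rewrite size_map size_iota. Qed.

Lemma size_G1 n : size (G1 n) < 2 ^ n.+1.
Proof.
rewrite /G1 size_flatten /shape -map_comp sumnE big_map.
by under eq_bigr => i _ do rewrite /= size_Omega; exact: geo.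
Qed.

Lemma size_SG_S n d : size (SG n d.+1) = \sum_(i <- iota 0 n.+1) 2 ^ i * size (SG (n - i) d).
Proof.
rewrite SG_S size_flatten /shape -map_comp sumnE big_map.
by apply: eq_bigr => i _; rewrite /= size_allpairs size_Omega.
Qed.

Lemma size_SG n d : size (SG n d.+1) <= n.+1 ^ d * 2 ^ n.+1.
Proof.
elim: d n => [|d IH] n.
  rewrite size_SG_S expn0 mul1n; under eq_bigr => i _ do rewrite muln1.
  exact: ltnW (geo n).
rewrite size_SG_S.
apply: (@leq_trans (\sum_(i <- iota 0 n.+1) n.+1 ^ d * 2 ^ n.+1)); last first.
  by rewrite sum_iota_const [n.+1 ^ d.+1]expnS mulnA.
rewrite big_seq [X in _ <= X]big_seq; apply: leq_sum => i; rewrite mem_iota add0n ltnS => Hi.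
apply: (leq_trans (leq_mul (leqnn _) (IH (n - i)))).
rewrite mulnCA leq_mul //; first by apply: leq_pow; rewrite ltnS leq_subr.
by rewrite -expnD -subSn // subnKC // ltnW.
Qed.

Lemma cost_S T e L : cost T e.+2 L =
    \sum_(i < L.+1)
      ( size (SG (L - i) e.+1) * T i + 2 ^ i * cost T e.+1 (L - i)
      + (L - i) * 2 ^ i * size (SG (L - i) e.+1) + 2 ^ i * cost T e.+1 (L - i)
      + size (G1 i) * size (SG (L - i) e.+1) + size (SG (L - i) e.+1) * T i
      + 2 ^ i * size (SG (L - i) e.+1)
      + 2 ^ i * size (SG (L - i) e.+1)).
Proof. by []. Qed.

Lemma cost_bound T c (HT : forall n, T n <= c * n.+1 * 2 ^ n) e :
  exists C, forall L, cost T e.+1 L <= C * L.+1 ^ e.+1 * 2 ^ L.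
Proof.
elim: e => [|e [C HC]]; first by exists c => L; rewrite expn1; exact: HT.
exists (4 * c + 2 * C + 10) => L; rewrite cost_S.
set M := L.+1 ^ e.
set Z := M * L.+1 * 2 ^ L.
apply: (@leq_trans (\sum_(i < L.+1) (4 * c + 2 * C + 10) * Z)); last first.
  rewrite sum_nat_const card_ord /Z /M [L.+1 ^ e.+2]expnS [L.+1 ^ e.+1]expnS.
  nia.
apply: leq_sum => j _; have := ltn_ord j; move: (nat_of_ord j) => i; rewrite ltnS => Hi.
set s := size (SG (L - i) e.+1).
set P := 2 ^ i. set Q := 2 ^ (L - i).
have hPQ : P * Q = 2 ^ L by rewrite -expnD subnKC.
have hM : (L - i).+1 ^ e <= M by apply: leq_pow; rewrite ltnS leq_subr.
have hs : s <= 2 * M * Q.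
  apply: (leq_trans (size_SG _ _)); rewrite expnS.
  have := leq_mul hM (leqnn (2 * Q)); nia.
have hT : T i <= c * L.+1 * P.
  apply: (leq_trans (HT i)); rewrite leq_mul // leq_mul //.
have hC : cost T e.+1 (L - i) <= C * (M * L.+1) * Q.
  apply: (leq_trans (HC _)); rewrite leq_mul // leq_mul // expnS mulnC leq_mul //.
  by rewrite ltnS leq_subr.
have hg : size (G1 i) <= 2 * P by rewrite /P -expnS; exact: ltnW (size_G1 i).
have h1 : s * T i <= 2 * c * Z.
  have := leq_mul hs hT; rewrite /Z -hPQ; nia.
have h2 : P * cost T e.+1 (L - i) <= C * Z.
  have := leq_mul (leqnn P) hC; rewrite /Z -hPQ; nia.
have h3 : (L - i) * P * s <= 2 * Z.
  have := leq_mul (leq_mul (leq_subr i L) (leqnn P)) hs; rewrite /Z -hPQ.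
  have : M * L * (P * Q) <= M * L.+1 * (P * Q) by rewrite leq_mul // leq_mul.
  nia.
have h4 : size (G1 i) * s <= 4 * Z.
  have := leq_mul hg hs; rewrite /Z -hPQ.
  have : M * 1 * (P * Q) <= M * L.+1 * (P * Q) by rewrite leq_mul // leq_mul.
  nia.
have h5 : P * s <= 2 * Z.
  have := leq_mul (leqnn P) hs; rewrite /Z -hPQ.
  have : M * 1 * (P * Q) <= M * L.+1 * (P * Q) by rewrite leq_mul // leq_mul.
  nia.
lia.
Qed.

Theorem theorem1 (R : realType) (d : nat) (hd : (0 < d)%N) :
  (* correctness: the algorithm computes K_{G_{L,d}} v on the sparse grid *)
  (forall (ks : nat -> R -> R) (L : nat) (v : pt -> R) (q : pt),
      q \in SG L d -> mvm ks d L v q = Kmul ks (SG L d) v q)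
  /\
  (* complexity: with O(n 2^n) Toeplitz multiplication, O(L^d 2^L) operations *)
  (forall (T : nat -> nat) (c : nat),
      (forall n, T n <= c * n.+1 * 2 ^ n)%N ->
      exists C : nat, forall L : nat, (cost T d L <= C * L.+1 ^ d * 2 ^ L)%N).
Proof.
case: d hd => // d _; split.
  by move=> ks L v q Hq; apply: mvm_correct.
by move=> T c HT; apply: cost_bound HT d.
Qed.
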